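(* Let $t,t'$ be graph monomials in $\mathcal{D}$ with vertex sets $V,V'$ and roots $\rho,\rho'$, and let $T=\tilde\Delta(tt')$, whose vertex set is $(V\sqcup V')/(\rho\sim\rho')$. Let $\pi$ be a partition of the vertex set of $T$ such that no block of $\pi$ contains two distinct vertices of $V$ and no block contains two distinct vertices of $V'$, and suppose that $T^\pi$ is an oriented cactus. Then every block of $\pi$ consists of exactly one vertex of $V$ and one vertex of $V'$ (the root block being $\{\rho=\rho'\}$), so $\pi$ induces a bijection $f_\pi:V\to V'$ with $v\overset{\pi}{\sim}f_\pi(v)$, and $f_\pi$ reverses adjacency: for $v,w\in V$, $t$ has an edge from $v$ to $w$ if and only if $t'$ has an edge from $f_\pi(w)$ to $f_\pi(v)$.
   Context: $(\mathcal{A},\varphi)$ is a tracial noncommutative probability space (unital complex algebra, unital tracial functional). A graph monomial in $\mathcal{A}$ is a finite connected directed multigraph with distinguished, not necessarily distinct, vertices $v_{\mathrm{in}},v_{\mathrm{out}}$ and edge labels in $\mathcal{A}$. The product $tt'$ identifies the input of $t$ with the output of $t'$; $\tilde\Delta(s)$ is the unrooted labelled graph obtained from $s$ by identifying its input and output. For a partition $\pi$ of the vertices, $T^\pi$ identifies the vertices in each block. A cactus is a connected multigraph with every edge in exactly one simple cycle (loops and pairs of parallel edges count as cycles); an oriented cactus is a directed multigraph whose underlying multigraph is a cactus and all of whose simple cycles are directed cycles. $\mathcal{D}$ is the set of graph monomials with $v_{\mathrm{in}}=v_{\mathrm{out}}$ (the root) such that: (A1) the underlying undirected graph is a tree; (A2)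 the root has degree $1$; (A3) no edge is labelled by a scalar multiple of $1_{\mathcal{A}}$; (A4) no vertex has both indegree and outdegree equal to one. *)

(* Defs.v *)
From HB Require Import structures.
From mathcomp Require Import all_boot all_order all_algebra.
From mathcomp Require Import complex.
From mathcomp Require Import reals.
Set Implicit Arguments. Unset Strict Implicit. Unset Printing Implicit Defensive.
Import Order.TTheory GRing.Theory Num.Theory.
Local Open Scope ring_scope.

Record graph (A : Type) := Graph {
  gV : finType;
  gE : finType;
  gsrc : gE -> gV;
  gtgt : gE -> gV;
  glab : gE -> A }.

Record gmono (A : Type) := GMono {
  gg :> graph A;
  gin : gV gg;
  gout : gV gg }.

Section Walks.
Variables (A : Type) (G : graph A).

(* A step of an undirected walk: an edge together with its traversal
   direction (true = from source to target, false = backwards). *)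
Definition sfrom (st : gE G * bool) : gV G :=
  if st.2 then gsrc st.1 else gtgt st.1.
Definition sto (st : gE G * bool) : gV G :=
  if st.2 then gtgt st.1 else gsrc st.1.

Fixpoint walk (x : gV G) (s : seq (gE G * bool)) : bool :=
  match s with
  | [::] => true
  | st :: s' => (sfrom st == x) && walk (sto st) s'
  end.

Definition wend (x : gV G) (s : seq (gE G * bool)) : gV G := last x (map sto s).

Definition connected : Prop :=
  forall x y : gV G, exists s, walk x s /\ wend x s = y.

(* simple cycle of the underlying multigraph (loops and pairs of parallel
   edges included): nonempty closed walk, no repeated edge, no repeated vertex *)
Definition scycle (x : gV G) (s : seq (gE G * bool)) : bool :=
  [&& s != [::], walk x s, wend x s == x, uniq (map fst s) & uniq (map sfrom s)].

Definition cedges (s : seq (gE G * bool)) : {set gE G} :=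
  [set e | e \in map fst s].

Definition is_tree : Prop :=
  connected /\ forall x s, ~~ scycle x s.

Definition cactus : Prop :=
  connected /\
  forall e : gE G, exists S : {set gE G},
    [/\ e \in S,
        (exists x s, scycle x s /\ cedges s = S) &
        (forall x s, scycle x s -> e \in cedges s -> cedges s = S)].

(* a simple cycle is a directed cycle: all edges traversed in the same
   direction (the cycle read one way or the other) *)
Definition directed_cycle (s : seq (gE G * bool)) : bool :=
  all (fun st => st.2) s || all (fun st => ~~ st.2) s.

Definition oriented_cactus : Prop :=
  cactus /\ forall x s, scycle x s -> directed_cycle s.

Definition indeg (v : gV G) : nat := #|[set e | gtgt e == v]|.
Definition outdeg (v : gV G) : nat := #|[set e | gsrc e == v]|.

Definition has_edge (v w : gV G) : Prop := exists e, gsrc e = v /\ gtgt e = w.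

End Walks.

(* Identifying two vertices a, b of a finite type (b is merged into a). *)
Section Glue.
Variables (X : finType) (a b : X).
Definition gluev := {x : X | (x != b) || (a == b)}.
Lemma glue_proof (x : X) : ((if x == b then a else x) != b) || (a == b).
Proof. case: (x =P b) => [_|/eqP ->] //; by case: (a =P b). Qed.
Definition glue (x : X) : gluev := exist (fun y : X => (y != b) || (a == b)) _ (glue_proof x).
End Glue.

(* product t t' : identify the input of t with the output of t' *)
Definition gmul (A : Type) (t t' : gmono A) : gmono A :=
  let g := glue (inl (gin t) : gV t + gV t') (inr (gout t')) in
  @GMono A
    (@Graph A (gluev (inl (gin t) : gV t + gV t') (inr (gout t')))
       (gE t + gE t')%type
       (fun e => match e with inl e => g (inl (gsrc e)) | inr e => g (inr (gsrc e)) end)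
       (fun e => match e with inl e => g (inl (gtgt e)) | inr e => g (inr (gtgt e)) end)
       (fun e => match e with inl e => glab e | inr e => glab e end))
    (g (inr (gin t')))
    (g (inl (gout t))).

(* tilde Delta (s): identify input and output, forget the roots *)
Definition gdelta (A : Type) (s : gmono A) : graph A :=
  let g := glue (gin s) (gout s) in
  @Graph A (gluev (gin s) (gout s)) (gE s)
    (fun e => g (gsrc e)) (fun e => g (gtgt e)) (@glab _ s).

Lemma pblock_in (T : finType) (P : {set {set T}}) (hP : partition P [set: T])
  (x : T) : pblock P x \in P.
Proof.
apply: pblock_mem; move: hP => /andP[/eqP -> _]; exact: in_setT.
Qed.

Definition qgraph (A : Type) (G : graph A) (P : {set {set gV G}})
    (hP : partition P [set: gV G]) : graph A :=
  @Graph A {B : {set gV G} | B \in P} (gE G)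
    (fun e => exist (fun B : {set gV G} => B \in P) _ (pblock_in hP (gsrc e)))
    (fun e => exist (fun B : {set gV G} => B \in P) _ (pblock_in hP (gtgt e)))
    (@glab _ G).

Definition inD (K : fieldType) (A : algType K) (t : gmono A) : Prop :=
  [/\ gin t = gout t,
      is_tree t,                                             (* (A1) *)
      indeg (gin t) + outdeg (gin t) = 1%N,                  (* (A2) *)
      (forall (e : gE t) (c : K), glab e <> c%:A)            (* (A3) *)
    & (forall v : gV t, ~ (indeg v = 1%N /\ outdeg v = 1%N))]. (* (A4) *)

Definition Tgraph (A : Type) (t t' : gmono A) : graph A := gdelta (gmul t t').

Definition embL (A : Type) (t t' : gmono A) (v : gV t) : gV (Tgraph t t') :=
  glue (gin (gmul t t')) (gout (gmul t t'))
    (glue (inl (gin t) : gV t + gV t') (inr (gout t')) (inl v)).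

Definition embR (A : Type) (t t' : gmono A) (v : gV t') : gV (Tgraph t t') :=
  glue (gin (gmul t t')) (gout (gmul t t'))
    (glue (inl (gin t) : gV t + gV t') (inr (gout t')) (inr v)).

Definition tracial_state (R : realType) (A : algType R[i])
    (phi : A -> (R[i])^o) : Prop :=
  [/\ linear phi, phi 1 = 1 & forall a b : A, phi (a * b) = phi (b * a)].

(* Main.v *)
Require Import Defs.
From HB Require Import structures.
From mathcomp Require Import all_boot all_order all_algebra.
From mathcomp Require Import complex reals.
Import Order.TTheory GRing.Theory Num.Theory.
Local Open Scope ring_scope.

Set Implicit Arguments. Unset Strict Implicit. Unset Printing Implicit Defensive.
Import Order.TTheory GRing.Theory Num.Theory.

Section WalkTheory.
Variables (A : Type) (G : graph A).
Implicit Types (x y z b : gV G) (s : seq (gE G * bool)) (st : gE G * bool).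

Definition vs x s := x :: map (@sto _ G) s.
Definition flip st : gE G * bool := (st.1, ~~ st.2).
Definition revw s := rev (map flip s).
Definition avoid b s := all (fun st => (sfrom st != b) && (sto st != b)) s.
Definition reach b y z := exists s, [/\ walk y s, wend y s = z & avoid b s].

Lemma sfrom_flip st : sfrom (flip st) = sto st.
Proof. by case: st => e []. Qed.
Lemma sto_flip st : sto (flip st) = sfrom st.
Proof. by case: st => e []. Qed.

Lemma walk_cat x s1 s2 : walk x (s1 ++ s2) = walk x s1 && walk (wend x s1) s2.
Proof. by elim: s1 x => [|st s1 IH] x //=; rewrite IH andbA. Qed.

Lemma wend_cat x s1 s2 : wend x (s1 ++ s2) = wend (wend x s1) s2.
Proof. by rewrite /wend map_cat last_cat. Qed.

Lemma wend_rcons x s st : wend x (rcons s st) = sto st.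
Proof. by rewrite /wend map_rcons last_rcons. Qed.

Lemma walk_rcons x s st : walk x (rcons s st) = walk x s && (sfrom st == wend x s).
Proof. by rewrite -cats1 walk_cat /= andbT. Qed.

Lemma vs_sfrom x s : walk x s -> rcons (map (@sfrom _ G) s) (wend x s) = vs x s.
Proof.
elim: s x => [|st s IH] x //= /andP[/eqP -> hw].
by rewrite /vs /= -[wend _ _]/(wend (sto st) s) IH.
Qed.

Lemma mem_vs_from x s st : walk x s -> st \in s -> sfrom st \in vs x s.
Proof.
move=> hw hs; rewrite -(vs_sfrom hw) mem_rcons inE; apply/orP; right.
exact: map_f.
Qed.

Lemma mem_vs_to x s st : st \in s -> sto st \in vs x s.
Proof. by move=> hs; rewrite inE map_f ?orbT. Qed.

Lemma avoid_vs x s b : walk x s -> b \notin vs x s -> avoid b s.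
Proof.
move=> hw hb; apply/allP => st hs /=.
apply/andP; split; apply/eqP => e; move: hb; rewrite -e.
  by rewrite (mem_vs_from hw hs).
by rewrite (mem_vs_to x hs).
Qed.

Lemma walk_revw x s : walk x s -> walk (wend x s) (revw s) /\ wend (wend x s) (revw s) = x.
Proof.
elim: s x => [|st s IH] x //= /andP[/eqP hx hw].
have [h1 h2] := IH _ hw.
rewrite /revw map_cons rev_cons -/(revw s) walk_rcons wend_rcons sto_flip hx.
by rewrite h1 /= sfrom_flip h2 eqxx.
Qed.

Lemma avoid_revw b s : avoid b (revw s) = avoid b s.
Proof.
rewrite /avoid /revw all_rev all_map; apply: eq_all => st /=.
by rewrite sfrom_flip sto_flip andbC.
Qed.

Lemma reach_sym b y z : reach b y z -> reach b z y.
Proof.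
case=> s [hw he ha]; exists (revw s); have [h1 h2] := walk_revw hw.
by rewrite -he; split => //; rewrite avoid_revw.
Qed.

Lemma reach_trans b x y z : reach b x y -> reach b y z -> reach b x z.
Proof.
case=> s1 [h1 e1 a1] [s2 [h2 e2 a2]]; exists (s1 ++ s2).
by rewrite walk_cat wend_cat /avoid all_cat e1 h1 h2 e2; split => //; apply/andP.
Qed.

Lemma wshorten x s : walk x s -> exists s',
  [/\ walk x s', wend x s' = wend x s, uniq (vs x s') & {subset s' <= s}].
Proof.
elim: s x => [|st s IH] x /=.
  by move=> _; exists [::]; split.
move=> /andP[/eqP hx hw].
have [s1 [w1 e1 u1 sub1]] := IH _ hw.
have -> : wend x (st :: s) = wend (sto st) s by [].
case: (boolP (x \in vs (sto st) s1)) => hin.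
  move: hin; rewrite inE => /orP[/eqP ->|].
    by exists s1; split => // y /sub1 hy; rewrite inE hy orbT.
  case/mapP => st0 hst0 ->.
  case/splitPr: hst0 w1 e1 u1 sub1 => sa sb.
  rewrite walk_cat /= => /andP[_ /andP[_ wb]].
  rewrite wend_cat /= => e1.
  rewrite /vs map_cat => hu sub1.
  have : uniq ((sto st :: map (@sto _ G) sa) ++ (sto st0 :: map (@sto _ G) sb)) by [].
  rewrite cat_uniq => /and3P[_ _ ub].
  exists sb; split => // y hy; rewrite inE; apply/orP; right; apply: sub1.
  by rewrite mem_cat inE hy !orbT.
exists (st :: s1); split => //=.
- by rewrite hx eqxx w1.
- by rewrite /vs /= -/(vs (sto st) s1) hin.
- by move=> y; rewrite !inE => /orP[->|/sub1 ->]; rewrite ?orbT.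
Qed.

Lemma step_ends st st0 : st.1 = st0.1 -> sfrom st = sfrom st0 \/ sfrom st = sto st0.
Proof. by case: st st0 => e [] [e0 []] /= <-; auto. Qed.

Lemma uniq_edges x s : walk x s -> uniq (vs x s) -> uniq (map fst s).
Proof.
elim: s x => [|st s IH] x //= /andP[/eqP hx hw].
rewrite /vs /= -/(vs (sto st) s) => /andP[hn hu].
rewrite (IH _ hw hu) andbT; apply/mapP => -[st0 hs0 he].
case: (step_ends he) => e; move: hn; rewrite -hx e.
  by rewrite (mem_vs_from hw hs0).
by rewrite (mem_vs_to _ hs0).
Qed.

Lemma mkcyc st a q : sto st = a -> walk a q -> wend a q = sfrom st ->
  uniq (vs a q) -> st.1 \notin map fst q -> scycle (sfrom st) (st :: q).
Proof.
move=> ha hw he hu hn; subst a; rewrite /scycle.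
have -> : wend (sfrom st) (st :: q) = wend (sto st) q by [].
rewrite /= eqxx hw he eqxx hn (uniq_edges hw hu) /=.
by move: hu; rewrite -(vs_sfrom hw) he rcons_uniq.
Qed.

Lemma scycle_rot x s1 st s2 : scycle x (s1 ++ st :: s2) ->
  scycle (sfrom st) (st :: s2 ++ s1) /\ cedges (st :: s2 ++ s1) = cedges (s1 ++ st :: s2).
Proof.
have hp : perm_eq (s1 ++ st :: s2) (st :: s2 ++ s1) by rewrite perm_catC.
move=> /and5P[_ hw /eqP he hu1 hu2]; split; last first.
  by apply/setP => e; rewrite !inE (perm_mem (perm_map fst hp)).
move: hw; rewrite walk_cat => /andP[hw1 /= /andP[/eqP hs hw2]].
have he' : wend (sto st) s2 = x by move: he; rewrite wend_cat => h; exact: h.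
apply/and5P; split => //.
- by rewrite /= eqxx walk_cat hw2 he' hw1.
- have -> : wend (sfrom st) (st :: s2 ++ s1) = wend (sto st) (s2 ++ s1) by [].
  by rewrite wend_cat he' hs.
- by rewrite -(perm_uniq (perm_map fst hp)).
- by rewrite -(perm_uniq (perm_map (@sfrom _ G) hp)).
Qed.

Lemma next_step x s st : walk x s -> wend x s = x -> st \in s ->
  exists2 st2, st2 \in s & sfrom st2 = sto st.
Proof.
move=> hw he hs; case/splitPr: hs hw he => s1 s2.
case: s2 => [|st2 s3].
  rewrite walk_cat => /andP[hw1 /andP[/eqP hsx _]].
  rewrite wend_cat => hx.
  have hx' : sto st = x by exact: hx.
  case: s1 hw1 hsx {hx} => [|st1 s1] hw1 hsx.
    by exists st; rewrite ?inE // hsx hx'.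
  case/andP: hw1 => /eqP h1 _.
  by exists st1; rewrite ?inE ?eqxx // h1 hx'.
rewrite walk_cat /= => /andP[_ /andP[_ /andP[/eqP h _]]] _.
by exists st2; rewrite // mem_cat !inE eqxx !orbT.
Qed.

Lemma avoid_notin b a s : avoid b s -> a != b -> b \notin vs a s.
Proof.
move=> hav ha; rewrite inE negb_or eq_sym ha /=; apply/mapP => -[st hs he].
by move/allP: hav => /(_ st hs) /andP[_]; rewrite -he eqxx.
Qed.

End WalkTheory.


Section MapWalk.
Variables (A : Type) (G1 G2 : graph A) (phi : gV G1 -> gV G2) (io : gE G1 -> gE G2).
Hypotheses (hsrc : forall e, gsrc (io e) = phi (gsrc e))
           (htgt : forall e, gtgt (io e) = phi (gtgt e)).

Definition mapw (s : seq (gE G1 * bool)) : seq (gE G2 * bool) :=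
  map (fun st => (io st.1, st.2)) s.

Lemma sfrom_map st : sfrom (io st.1, st.2) = phi (sfrom st).
Proof. by case: st => e []; rewrite /sfrom /= ?hsrc ?htgt. Qed.
Lemma sto_map st : sto (io st.1, st.2) = phi (sto st).
Proof. by case: st => e []; rewrite /sto /= ?hsrc ?htgt. Qed.

Lemma walk_map x s : walk x s -> walk (phi x) (mapw s).
Proof.
elim: s x => [|st s IH] x //= /andP[/eqP hx hw].
by rewrite sfrom_map hx eqxx sto_map IH.
Qed.

Lemma wend_map x s : wend (phi x) (mapw s) = phi (wend x s).
Proof.
rewrite /wend /mapw -map_comp (@eq_map _ _ _ (phi \o (@sto _ G1))); last first.
  by move=> st /=; rewrite sto_map.
by rewrite map_comp last_map.
Qed.

Lemma map_sto_map s : map (@sto _ G2) (mapw s) = map phi (map (@sto _ G1) s).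
Proof. by rewrite /mapw -!map_comp; apply: eq_map => st /=; rewrite sto_map. Qed.
Lemma map_sfrom_map s : map (@sfrom _ G2) (mapw s) = map phi (map (@sfrom _ G1) s).
Proof. by rewrite /mapw -!map_comp; apply: eq_map => st /=; rewrite sfrom_map. Qed.
Lemma map_fst_map s : map fst (mapw s) = map io (map fst s).
Proof. by rewrite /mapw -!map_comp. Qed.

Lemma vs_map x s : vs (phi x) (mapw s) = map phi (vs x s).
Proof. by rewrite /vs map_sto_map. Qed.

Hypotheses (phi_inj : injective phi) (io_inj : injective io).

Lemma walk_map_inj x s : walk (phi x) (mapw s) = walk x s.
Proof.
elim: s x => [|st s IH] x //=.
by rewrite sfrom_map (inj_eq phi_inj) sto_map IH.
Qed.

Lemma scycle_map x s : scycle (phi x) (mapw s) = scycle x s.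
Proof.
rewrite /scycle walk_map_inj wend_map (inj_eq phi_inj) map_fst_map map_sfrom_map.
by rewrite !(map_inj_uniq phi_inj) (map_inj_uniq io_inj); case: s.
Qed.

End MapWalk.


Section R1.
Variables (A : Type) (H t t' : graph A) (rho : gV t) (rho' : gV t').
Variables (phi : gV t -> gV H) (phi' : gV t' -> gV H)
          (io : gE t -> gE H) (io' : gE t' -> gE H).
Hypotheses (hsrc : forall e, gsrc (io e) = phi (gsrc e))
           (htgt : forall e, gtgt (io e) = phi (gtgt e))
           (hsrc' : forall e, gsrc (io' e) = phi' (gsrc e))
           (htgt' : forall e, gtgt (io' e) = phi' (gtgt e)).
Hypotheses (phi_inj : injective phi) (io_inj : injective io).
Hypothesis hclass : forall h : gE H, (exists e, h = io e) \/ (exists e, h = io' e).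
Hypothesis hdisj : forall e g, io e <> io' g.
Hypothesis hroot : phi rho = phi' rho'.
Hypothesis htree : is_tree t.
Hypothesis hconn' : connected t'.
Hypothesis hA4 : forall v : gV t, ~ (indeg v = 1%N /\ outdeg v = 1%N).
Hypothesis hcac : oriented_cactus H.
Implicit Types (e : gE t) (g : gE t').

Lemma cyc_unique (h : gE H) (x y : gV H) (s s' : seq (gE H * bool)) : scycle x s -> scycle y s' ->
  h \in cedges s -> h \in cedges s' -> cedges s = cedges s'.
Proof.
move=> c1 c2 i1 i2; have [S [_ _ hS]] := hcac.1.2 h.
by rewrite (hS _ _ c1 i1) (hS _ _ c2 i2).
Qed.

Lemma cyc_exists (h : gE H) : exists (x : gV H) s, scycle x s /\ h \in cedges s.
Proof. have [S [hin [x [s [c hc]]] _]] := hcac.1.2 h. by exists x, s; rewrite hc. Qed.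

Lemma noloop e : gsrc e != gtgt e.
Proof.
apply/negP => /eqP he; move: (htree.2 (gsrc e) [:: (e, true)]).
by rewrite /scycle /= /sfrom /sto /wend /= he eqxx.
Qed.

Lemma lift_or (s : seq (gE H * bool)) : (exists2 st, st \in s & exists g, st.1 = io' g)
  \/ exists s0, s = mapw io s0.
Proof.
elim: s => [|st s IH]; first by right; exists [::].
case: (hclass st.1) => [[e he]|[g he']].
  case: IH => [[st0 h0 h0']|[s0 ->]].
    by left; exists st0; rewrite // inE h0 orbT.
  by right; exists ((e, st.2) :: s0); case: st he => a b /= ->.
by left; exists st; rewrite ?inE ?eqxx //; exists g.
Qed.

Lemma has_io' (x : gV H) s : scycle x s -> exists2 st, st \in s & exists g, st.1 = io' g.
Proof.
move=> c; case: (lift_or s) => // -[s0 hs]; subst s.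
case: s0 c => [|st0 s0] c; first by case/and5P: c.
have hx : x = phi (sfrom st0).
  case/and5P: c => _ /= /andP[/eqP <- _] _ _ _.
  by rewrite (sfrom_map hsrc htgt).
rewrite hx (scycle_map hsrc htgt phi_inj io_inj) in c.
by move: (htree.2 (sfrom st0) (st0 :: s0)); rewrite c.
Qed.

Section Bad.
Variable v : gV t.
Hypothesis hbad : forall z, phi' z <> phi v.

Definition atv e := (gsrc e == v) || (gtgt e == v).
Definition oth e := if gsrc e == v then gtgt e else gsrc e.

Lemma oth_neq e : oth e != v.
Proof.
rewrite /oth; case: (gsrc e =P v) => [hs|hs]; last by apply/eqP.
by move: (noloop e); rewrite hs eq_sym.
Qed.

Lemma phi_oth_neq e : phi (oth e) != phi v.
Proof. by rewrite (inj_eq phi_inj) oth_neq. Qed.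

Lemma step_beta (st : gE H * bool) : sfrom st = phi v ->
  exists e, [/\ st.1 = io e, atv e & sto st = phi (oth e)].
Proof.
case: (hclass st.1) => [[e he]|[e he]] hs; last first.
  by move: hs; case: st he => h [] /= ->; rewrite /sfrom /= ?hsrc' ?htgt' => /hbad.
exists e; move: hs; case: st he => h [] /= ->; rewrite /sfrom /sto /= ?hsrc ?htgt => /phi_inj hv.
  by split => //; rewrite /atv /oth hv eqxx.
have hn : gsrc e != v by rewrite -hv noloop.
split => //; first by rewrite /atv hv eqxx orbT.
by rewrite /oth (negbTE hn).
Qed.

Lemma step_beta' (st : gE H * bool) : sto st = phi v ->
  exists e, [/\ st.1 = io e, atv e & sfrom st = phi (oth e)].
Proof.
rewrite -sfrom_flip => /step_beta [e [h1 h2 h3]]; exists e; split => //.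
by rewrite -sto_flip.
Qed.

Lemma io_at_beta (st : gE H * bool) e : st.1 = io e -> atv e -> (sfrom st == phi v) || (sto st == phi v).
Proof.
case: st => h [] /= ->; rewrite /sfrom /sto /= hsrc htgt /atv !(inj_eq phi_inj) //.
by rewrite orbC.
Qed.

Lemma avoid_not_at (s : seq (gE H * bool)) e : avoid (phi v) s -> atv e -> io e \notin map fst s.
Proof.
move=> ha he; apply/mapP => -[st hs hst].
move/allP: ha => /(_ st hs) /andP[h1 h2].
by move: (io_at_beta (esym hst) he); rewrite (negbTE h1) (negbTE h2).
Qed.

Lemma sfrom_io' (st : gE H * bool) g : st.1 = io' g -> exists z, sfrom st = phi' z.
Proof. by case: st => h [] /= ->; rewrite /sfrom /= ?hsrc' ?htgt'; eexists. Qed.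

Lemma reach_root z : reach (phi v) (phi' z) (phi rho).
Proof.
have [s [hw he]] := hconn' z rho'.
exists (mapw io' s); rewrite (wend_map hsrc' htgt') he hroot; split.
- exact: walk_map.
- by [].
- apply/allP => st /mapP [st0 _ ->].
  by rewrite (sfrom_map hsrc' htgt') (sto_map hsrc' htgt'); apply/andP; split; apply/eqP.
Qed.

Lemma K e : atv e ->
  (exists2 e2, atv e2 & e2 != e) /\ reach (phi v) (phi (oth e)) (phi rho).
Proof.
move=> hae.
have [x [s [c hin]]] := cyc_exists (io e).
have [stb hsb hb] : exists2 stb, stb \in s & sfrom stb = phi v.
  move: hin; rewrite inE => /mapP [st hs hst].
  case/orP: (io_at_beta (esym hst) hae) => /eqP h; first by exists st.
  case/and5P: c => _ hw /eqP he _ _.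
  have [st2 h2 h2'] := next_step hw he hs.
  by exists st2; rewrite // h2' h.
case/splitPr: hsb c hin => s1 s2 c hin.
have [c' hce] := scycle_rot c.
rewrite -hce hb in hin c' *.
move: (s2 ++ s1) c' hin => r c' hin {c hce}.
have [e1 [he1 ha1 hto1]] := step_beta hb.
case/lastP: r c' hin => [|r' st2] c' hin.
  case/and5P: c' => _ _ /eqP hw _ _.
  have : sto stb = phi v := hw.
  by rewrite hto1 => /eqP; rewrite (negbTE (phi_oth_neq e1)).
have c0 := c'.
case/and5P: c' => _ /= /andP[_ hw] /eqP hwe hu1 hu2.
rewrite walk_rcons in hw; case/andP: hw => hw' /eqP hsf2.
have h2 : sto st2 = phi v.
  by move: hwe; rewrite -[wend _ (stb :: _)]/(wend (sto stb) (rcons r' st2)) wend_rcons.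
have [e2 [he2 ha2 hfr2]] := step_beta' h2.
move: hu2; rewrite /= map_rcons hsf2 (vs_sfrom hw') hb => /andP[hnv _].
have har := avoid_vs hw' hnv.
have hne : e1 != e2.
  move: hu1; rewrite /= map_rcons mem_rcons inE he1 he2 => /andP[/norP[hne _] _].
  by apply: contra hne => /eqP ->.
have hee : (e == e1) || (e == e2).
  move: hin; rewrite inE map_cons map_rcons in_cons mem_rcons in_cons he1 he2.
  by rewrite (negbTE (avoid_not_at har hae)) orbF !(inj_eq io_inj).
have [st' hst' [g hg]] := has_io' c0.
have hst'r : st' \in r'.
  move: hst'; rewrite inE mem_rcons inE => /or3P [/eqP hh|/eqP hh|//]; subst st'.
    by case: (@hdisj e1 g); rewrite -he1 hg.
  by case: (@hdisj e2 g); rewrite -he2 hg.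
case/splitPr: hst'r hw' har hsf2 => r1 r2 hw' har hsf2.
rewrite walk_cat in hw'; case/andP: hw' => hw1 /= /andP[/eqP hsf' hw2].
move: har; rewrite /avoid all_cat => /andP[ha1r /= /andP[hp' ha2r]].
have [z hz] := sfrom_io' hg.
have rA : reach (phi v) (sto stb) (phi' z) by exists r1; split => //; rewrite -hz hsf'.
have rB : reach (phi v) (phi' z) (sfrom st2).
  exists (st' :: r2); split.
  - by rewrite -hz /= eqxx.
  - by rewrite hsf2 wend_cat.
  - by rewrite /avoid /= hp'.
have rA' := reach_trans rA (reach_root z).
have rB' := reach_trans (reach_sym rB) (reach_root z).
case/orP: hee => /eqP ->.
  split; first by exists e2; rewrite // eq_sym.
  by rewrite -hto1.
split; first by exists e1.
by rewrite -hfr2.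
Qed.

Lemma pair_cyc e1 e2 : atv e1 -> atv e2 -> e1 != e2 ->
  reach (phi v) (phi (oth e1)) (phi (oth e2)) ->
  exists (x : gV H) C, [/\ scycle x C, io e1 \in cedges C, io e2 \in cedges C,
     (forall e3, atv e3 -> io e3 \in cedges C -> e3 = e1 \/ e3 = e2) &
     (directed_cycle C -> (gsrc e1 == v) = (gtgt e2 == v))].
Proof.
move=> ha1 ha2 hne [w [hw hwe hwa]].
have [p [hp hpe hpu hps]] := wshorten hw.
rewrite hwe in hpe.
have hpa : avoid (phi v) p by apply/allP => st /hps hst; exact: (allP hwa st hst).
pose st1 : gE H * bool := (io e1, gsrc e1 == v).
pose st2 : gE H * bool := (io e2, gtgt e2 == v).
have [f1 t1] : sfrom st1 = phi v /\ sto st1 = phi (oth e1).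
  rewrite /st1 /sfrom /sto /oth /=; case: (boolP (gsrc e1 == v)) => h /=.
    by rewrite hsrc htgt (eqP h).
  rewrite hsrc htgt; split => //.
  by move: ha1; rewrite /atv (negbTE h) /= => /eqP ->.
have [f2 t2] : sfrom st2 = phi (oth e2) /\ sto st2 = phi v.
  rewrite /st2 /sfrom /sto /oth /=; case: (boolP (gtgt e2 == v)) => h /=.
    have hn : gsrc e2 != v by rewrite -(eqP h) noloop.
    by rewrite hsrc htgt (eqP h) (negbTE hn).
  have hs : gsrc e2 == v by move: ha2; rewrite /atv (negbTE h) orbF.
  by rewrite hsrc htgt (eqP hs) eqxx.
have c : scycle (sfrom st1) (st1 :: rcons p st2).
  apply: (mkcyc t1).
  - by rewrite walk_rcons hp hpe f2 eqxx.
  - by rewrite wend_rcons t2 f1.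
  - rewrite /vs map_rcons -rcons_cons rcons_uniq -/(vs _ p) hpu andbT.
    by rewrite t2; exact: (avoid_notin hpa (phi_oth_neq e1)).
    rewrite map_rcons mem_rcons in_cons negb_or /= (inj_eq io_inj) hne /=.
    exact: avoid_not_at.
rewrite f1 in c; exists (phi v), (st1 :: rcons p st2); split => //.
- by rewrite inE map_cons in_cons eqxx.
- by rewrite inE map_cons in_cons map_rcons mem_rcons in_cons eqxx orbT.
- move=> e3 ha3; rewrite inE map_cons in_cons map_rcons mem_rcons in_cons /=.
  rewrite (negbTE (avoid_not_at hpa ha3)) orbF !(inj_eq io_inj).
  by case/orP => /eqP ->; auto.
- have i2 : st2 \in st1 :: rcons p st2 by rewrite in_cons mem_rcons mem_head orbT.
  rewrite /directed_cycle => /orP[] /allP h.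
    have := h st1 (mem_head _ _).
    have := h st2 i2.
    by rewrite /= => -> ->.
  have := h st1 (mem_head _ _).
  have := h st2 i2.
  by rewrite /= => /negbTE -> /negbTE ->.
Qed.

Lemma bad_false : False.
Proof.
have hvr : v != rho.
  by apply/eqP => hv; have := @hbad rho'; rewrite -hroot hv; apply.
have [e0 ha0] : exists e, atv e.
  have [s [hw he]] := htree.1 v rho.
  case: s hw he => [|st s] /=.
    by move=> _ hh; exfalso; move/eqP: hvr; apply; exact: hh.
  move=> /andP[/eqP hx _] _; exists st.1; move: hx.
  by case: st => e [] /=; rewrite /sfrom /atv /= => ->; rewrite eqxx ?orbT.
have [[e2 ha2 hne2] r0] := K ha0.
have [_ r2] := K ha2.
have r02 := reach_trans r0 (reach_sym r2).
have hne02 : e0 != e2 by rewrite eq_sym.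
have [x [C [cC i0 i2 hC hd]]] := pair_cyc ha0 ha2 hne02 r02.
have hall : forall e3, atv e3 -> e3 = e0 \/ e3 = e2.
  move=> e3 ha3; case: (e3 =P e0) => [->|h3]; first by left.
  have [_ r3] := K ha3.
  have hne3 : e0 != e3 by apply/eqP => h; apply: h3.
  have [y [D [cD j0 j3 _ _]]] := pair_cyc ha0 ha3 hne3 (reach_trans r0 (reach_sym r3)).
  by apply: (hC e3 ha3); rewrite (cyc_unique cC cD i0 j0).
have hdir := hd (hcac.2 _ _ cC).
apply: (@hA4 v); rewrite /indeg /outdeg.
case: (boolP (gsrc e0 == v)) hdir => hs0 hdir.
  have ht2 : gtgt e2 == v by rewrite -hdir.
  have -> : [set e | gtgt e == v] = [set e2].
    apply/setP => e; rewrite !inE; apply/idP/idP => [ht|/eqP -> //].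
    have hae : atv e by rewrite /atv ht orbT.
    have [he|->] := hall e hae; last by [].
    by move: (noloop e0); rewrite (eqP hs0) -he (eqP ht) eqxx.
  have -> : [set e | gsrc e == v] = [set e0].
    apply/setP => e; rewrite !inE; apply/idP/idP => [hs|/eqP -> //].
    have hae : atv e by rewrite /atv hs.
    have [->|he] := hall e hae; first by [].
    by move: (noloop e2); rewrite (eqP ht2) -he (eqP hs) eqxx.
  by rewrite !cards1.
have ht0 : gtgt e0 == v by move: ha0; rewrite /atv (negbTE hs0).
have hs2 : gsrc e2 == v.
  by move: ha2; rewrite /atv -hdir orbF.
have -> : [set e | gtgt e == v] = [set e0].
  apply/setP => e; rewrite !inE; apply/idP/idP => [ht|/eqP -> //].
  have hae : atv e by rewrite /atv ht orbT.
  have [->|he] := hall e hae; first by [].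
  by move: hdir; rewrite -he ht.
have -> : [set e | gsrc e == v] = [set e2].
  apply/setP => e; rewrite !inE; apply/idP/idP => [hs|/eqP -> //].
  have hae : atv e by rewrite /atv hs.
  have [he|->] := hall e hae; last by [].
  by move: hs0; rewrite -he hs.
by rewrite !cards1.
Qed.

End Bad.

Lemma R1_all v : exists v', phi' v' = phi v.
Proof.
case: (pickP (fun z => phi' z == phi v)) => [z /eqP hz|hn]; first by exists z.
exfalso; apply: (bad_false (v := v)) => z hz.
by move: (hn z); rewrite hz eqxx.
Qed.

End R1.


Section R2.
Variables (A : Type) (H t t' : graph A).
Variables (phi : gV t -> gV H) (phi' : gV t' -> gV H)
          (io : gE t -> gE H) (io' : gE t' -> gE H).
Hypotheses (hsrc : forall e, gsrc (io e) = phi (gsrc e))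
           (htgt : forall e, gtgt (io e) = phi (gtgt e))
           (hsrc' : forall e, gsrc (io' e) = phi' (gsrc e))
           (htgt' : forall e, gtgt (io' e) = phi' (gtgt e)).
Hypotheses (phi_inj : injective phi) (phi'_inj : injective phi')
           (io_inj : injective io) (io'_inj : injective io').
Hypothesis hdisj : forall e g, io e <> io' g.
Hypothesis htree : is_tree t.
Hypothesis htree' : is_tree t'.
Hypothesis surj : forall u', exists u, phi u = phi' u'.
Hypothesis hcac : oriented_cactus H.

Lemma R2 v w v' w' : phi' v' = phi v -> phi' w' = phi w -> has_edge v w -> has_edge w' v'.
Proof.
move=> hv hw [e [hs ht]].
have hvw : v != w by rewrite -hs -ht (noloop htree).
have hvw' : v' != w'.
  by apply: contra hvw => /eqP h; apply/eqP; apply: phi_inj; rewrite -hv -hw h.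
have [s0 [hw0 he0]] := htree'.1 w' v'.
have [p [hp hpe hpu _]] := wshorten hw0.
rewrite he0 in hpe.
pose st : gE H * bool := (io e, true).
have ft : sfrom st = phi v by rewrite /st /sfrom /= hsrc hs.
have tt : sto st = phi' w' by rewrite /st /sto /= htgt ht hw.
have c : scycle (sfrom st) (st :: mapw io' p).
  apply: (mkcyc tt).
  - exact: walk_map.
  - by rewrite (wend_map hsrc' htgt') hpe hv ft.
  - by rewrite (vs_map hsrc' htgt') (map_inj_uniq phi'_inj).
  - by rewrite map_fst_map; apply/mapP => -[g _ h]; exact: (hdisj h).
rewrite ft in c.
case: p hp hpe hpu c => [|st1 [|st2 p]] hp hpe hpu c.
- have h : w' = v' := hpe.
  by rewrite h eqxx in hvw'.
- have hd := hcac.2 _ _ c.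
  move: hd hp hpe; rewrite /directed_cycle /=.
  case: st1 {c hpu} => g [] //= _; rewrite /sfrom /= andbT => /eqP h1 h2.
  by exists g; split.
- move: hp => /= /andP[/eqP hf1 hp].
  have hu' : sto st1 != w'.
    by move: hpu; rewrite /vs /= inE negb_or => /andP[/andP[h _] _]; rewrite eq_sym.
  have [u hu] := surj (sto st1).
  have [q0 [hq0 hqe0]] := htree.1 u w.
  have [q [hq hqe hqu _]] := wshorten hq0.
  rewrite hqe0 in hqe.
  pose st' : gE H * bool := (io' st1.1, st1.2).
  have ft' : sfrom st' = phi w by rewrite /st' (sfrom_map hsrc' htgt') hf1.
  have tt' : sto st' = phi u by rewrite /st' (sto_map hsrc' htgt') hu.
  have c2 : scycle (sfrom st') (st' :: mapw io q).
    apply: (mkcyc tt').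
    - exact: walk_map.
    - by rewrite (wend_map hsrc htgt) hqe ft'.
    - by rewrite (vs_map hsrc htgt) (map_inj_uniq phi_inj).
    - by rewrite map_fst_map; apply/mapP => -[g _ h]; exact: (hdisj (esym h)).
  have i1 : io' st1.1 \in cedges (st :: mapw io' [:: st1, st2 & p]).
    by rewrite inE /= !inE eqxx orbT.
  have i2 : io' st1.1 \in cedges (st' :: mapw io q) by rewrite inE /= !inE eqxx.
  have hce := cyc_unique hcac c c2 i1 i2.
  have : io' st2.1 \in cedges (st :: mapw io' [:: st1, st2 & p]).
    by rewrite inE /= !inE eqxx !orbT.
  rewrite hce inE /= inE map_fst_map => /orP[/eqP /io'_inj h|/mapP [e0 _ h]]; last first.
    by case: (hdisj (esym h)).
  have hue := uniq_edges (x := w') (s := [:: st1, st2 & p]).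
  move: hue; rewrite /= hf1 eqxx hp => /(_ isT hpu) /andP[].
  by rewrite inE h eqxx.
Qed.

End R2.


Lemma sig_eqb (X : Type) (P : X -> bool) (x y : {z | P z}) :
  proj1_sig x = proj1_sig y -> x = y.
Proof.
case: x y => x px [y py] /= e; subst y.
by rewrite (bool_irrelevance px py).
Qed.

Lemma glue_same (X : finType) (a b y : X) : a = b -> proj1_sig (glue a b y) = y.
Proof. by move=> <-; rewrite /glue /=; case: eqP => [->|]. Qed.

Section Emb.
Variables (A : Type) (t t' : gmono A).
Hypotheses (hrt : gin t = gout t) (hrt' : gin t' = gout t').

Lemma gmul_io : gin (gmul t t') = gout (gmul t t').
Proof. by apply: sig_eqb; rewrite /= -hrt' eqxx hrt. Qed.

Lemma embLE (v : gV t) : proj1_sig (proj1_sig (embL t' v)) = inl v.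
Proof. by rewrite /embL glue_same ?gmul_io. Qed.

Lemma embRE (v' : gV t') : proj1_sig (proj1_sig (embR t v')) =
  if v' == gout t' then inl (gin t) else inr v'.
Proof.
by rewrite /embR glue_same ?gmul_io.
Qed.

Lemma embT_inj (x y : gV (Tgraph t t')) :
  proj1_sig (proj1_sig x) = proj1_sig (proj1_sig y) -> x = y.
Proof. by move=> h; apply: sig_eqb; apply: sig_eqb. Qed.

Lemma embL_inj : injective (@embL _ t t').
Proof. by move=> v w /(congr1 (fun x => proj1_sig (proj1_sig x))); rewrite !embLE => -[]. Qed.

Lemma embR_inj : injective (@embR _ t t').
Proof.
move=> v w /(congr1 (fun x => proj1_sig (proj1_sig x))); rewrite !embRE.
by do 2 case: eqP => [->|?] //; move=> [].
Qed.

Lemma embRL : embR t (gin t') = embL t' (gin t).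
Proof. by apply: embT_inj; rewrite embRE embLE hrt' eqxx. Qed.

Lemma emb_surj (x : gV (Tgraph t t')) :
  (exists v, x = embL t' v) \/ (exists v', x = embR t v').
Proof.
case E: (proj1_sig (proj1_sig x)) => [v|v'].
  by left; exists v; apply: embT_inj; rewrite E embLE.
right; exists v'; apply: embT_inj; rewrite E embRE.
case: eqP => // hv; exfalso.
have := proj2_sig (proj1_sig x); rewrite E hv eqxx /=.
by case: eqP.
Qed.

End Emb.

Unset Implicit Arguments.

Theorem lemma2p27 (R : realType) (A : algType R[i]) (phi : A -> (R[i])^o)
  (hphi : tracial_state phi)
  (t t' : gmono A) (ht : inD t) (ht' : inD t')
  (P : {set {set gV (Tgraph t t')}})
  (hP : partition P [set: gV (Tgraph t t')])
  (hPV : forall B, B \in P -> forall v w : gV t,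
           embL t' v \in B -> embL t' w \in B -> v = w)
  (hPV' : forall B, B \in P -> forall v w : gV t',
           embR t v \in B -> embR t w \in B -> v = w)
  (hcac : oriented_cactus (qgraph hP)) :
  [/\ forall B, B \in P -> exists (v : gV t) (v' : gV t'),
        B = [set embL t' v; embR t v'],
      pblock P (embL t' (gin t)) = [set embL t' (gin t)],
      embR t (gin t') = embL t' (gin t)
    & exists f : gV t -> gV t',
        [/\ bijective f,
            forall v, embR t (f v) \in pblock P (embL t' v)
          & forall v w : gV t, has_edge v w <-> has_edge (f w) (f v)]].
Proof.
case: ht => hrt htr _ _ hA4.
case: ht' => hrt' htr' _ _ hA4'.
have /and3P [/eqP hcov htriv hnot0] := hP.
have mem_pb : forall x, x \in pblock P x by move=> x; rewrite mem_pblock hcov inE.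
pose psi (x : gV (Tgraph t t')) : gV (qgraph hP) :=
  exist (fun B => B \in P) (pblock P x) (pblock_in hP x).
have psi_eq : forall x y, psi x = psi y -> pblock P x = pblock P y.
  by move=> x y /(congr1 (@proj1_sig _ _)).
pose phi1 (v : gV t) := psi (embL t' v).
pose phi2 (v : gV t') := psi (embR t v).
pose io1 (e : gE t) : gE (qgraph hP) := inl e.
pose io2 (e : gE t') : gE (qgraph hP) := inr e.
have hsrc1 : forall e, gsrc (io1 e) = phi1 (gsrc e) by [].
have htgt1 : forall e, gtgt (io1 e) = phi1 (gtgt e) by [].
have hsrc2 : forall e, gsrc (io2 e) = phi2 (gsrc e) by [].
have htgt2 : forall e, gtgt (io2 e) = phi2 (gtgt e) by [].
have phi1_inj : injective phi1.
  move=> v w /psi_eq h.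
  apply: (hPV _ (pblock_in hP (embL t' v)) v w (mem_pb _)).
  by rewrite h mem_pb.
have phi2_inj : injective phi2.
  move=> v w /psi_eq h.
  apply: (hPV' _ (pblock_in hP (embR t v)) v w (mem_pb _)).
  by rewrite h mem_pb.
have io1_inj : injective io1 by move=> a b [].
have io2_inj : injective io2 by move=> a b [].
have hclass1 : forall h : gE (qgraph hP), (exists e, h = io1 e) \/ (exists e, h = io2 e).
  by case=> e; [left|right]; exists e.
have hclass2 : forall h : gE (qgraph hP), (exists e, h = io2 e) \/ (exists e, h = io1 e).
  by case=> e; [right|left]; exists e.
have hdisj1 : forall e g, io1 e <> io2 g by [].
have hdisj2 : forall e g, io2 e <> io1 g by [].
have hERL := embRL hrt hrt'.
have hroot1 : phi1 (gin t) = phi2 (gin t') by rewrite /phi1 /phi2 hERL.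
have R1a := R1_all hsrc1 htgt1 hsrc2 htgt2 phi1_inj io1_inj hclass1 hdisj1 hroot1
  htr htr'.1 hA4 hcac.
have R1b := R1_all hsrc2 htgt2 hsrc1 htgt1 phi2_inj io2_inj hclass2 hdisj2
  (esym hroot1) htr' htr.1 hA4' hcac.
have [f hf] := fin_all_exists R1a.
have [g hg] := fin_all_exists R1b.
have blk : forall B, B \in P -> forall v v', embL t' v \in B -> embR t v' \in B ->
    B = [set embL t' v; embR t v'].
  move=> B hB v v' hv hv'; apply/setP => y; rewrite !inE.
  apply/idP/idP => [hy|/orP[]/eqP -> //].
  case: (emb_surj hrt hrt' y) hy => -[w ->] hy.
    by rewrite (hPV _ hB w v hy hv) eqxx.
  by rewrite (hPV' _ hB w v' hy hv') eqxx orbT.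
split.
- move=> B hB.
  have [x hx] : exists x, x \in B.
    case: (set_0Vmem B) => [h0|[x hx]]; last by exists x.
    by move: hnot0; rewrite -h0 hB.
  have hBx := def_pblock htriv hB hx.
  case: (emb_surj hrt hrt' x) => -[v hv]; subst x.
    exists v, (f v); apply: blk => //.
    by rewrite -hBx -(psi_eq _ _ (hf v)) mem_pb.
  exists (g v), v; apply: blk => //.
  by rewrite -hBx -(psi_eq _ _ (hg v)) mem_pb.
- apply/setP => y; rewrite inE; apply/idP/idP => [hy|/eqP -> //].
  have hBP := pblock_in hP (embL t' (gin t)).
  case: (emb_surj hrt hrt' y) => -[w hw]; subst y.
    by rewrite (hPV _ hBP w (gin t) hy (mem_pb _)).
  have hg0 : embR t (gin t') \in pblock P (embL t' (gin t)) by rewrite hERL.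
  by rewrite (hPV' _ hBP w (gin t') hy hg0) hERL.
- exact: hERL.
exists f; split.
- exists g => [v|v'].
    by apply: phi1_inj; rewrite hg hf.
  by apply: phi2_inj; rewrite hf hg.
- by move=> v; rewrite -(psi_eq _ _ (hf v)) mem_pb.
move=> v w; split.
  exact: (R2 hsrc1 htgt1 hsrc2 htgt2 phi1_inj phi2_inj io2_inj hdisj1 htr htr'
    (fun u' => ex_intro _ (g u') (hg u')) hcac (hf v) (hf w)).
exact: (R2 hsrc2 htgt2 hsrc1 htgt1 phi2_inj phi1_inj io1_inj hdisj2 htr' htr
    (fun u => ex_intro _ (f u) (hf u)) hcac (esym (hf w)) (esym (hf v))).
Qed.
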